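(* Let $(\mathcal{B},\mathcal{B}',\langle\cdot,\cdot\rangle,k)$ be an RKBS with kernel on a set $X$ such that the set $\{k(x,\cdot):x\in X\}\subset\mathcal{B}'$ is linearly independent, and let $f:X\to X$. Then the Perron–Frobenius operator $K_f$ is densely defined with respect to $\langle\cdot,\cdot\rangle$, and $U_f=K_f'$, where $K_f'$ is the adjoint of $K_f$ with respect to $\langle\cdot,\cdot\rangle$.
   Context: An RKBS with kernel on $X$ is a quadruple $(\mathcal{B},\mathcal{B}',\langle\cdot,\cdot\rangle,k)$: $\mathcal{B},\mathcal{B}'$ are Banach spaces of functions on $X$ (pointwise operations), point evaluations on $\mathcal{B}$ are continuous, $\langle\cdot,\cdot\rangle:\mathcal{B}\times\mathcal{B}'\to\mathbb{C}$ is continuous bilinear, and $k:X\times X\to\mathbb{C}$ satisfies $k(x,\cdot)\in\mathcal{B}'$ and $g(x)=\langle g,k(x,\cdot)\rangle$ for all $x\in X$, $g\in\mathcal{B}$. The Koopman operator is $U_fg:=g\circ f$ on $D(U_f):=\{g\in\mathcal{B}: g\circ f\in\mathcal{B}\}$. The Perron–Frobenius operator $K_f:\mathrm{Span}\{k(x,\cdot):x\in X\}\to\mathrm{Span}\{k(x,\cdot):x\in X\}$ is the linear extension of $K_fk(x,\cdot):=k(f(x),\cdot)$. A subset $W\subset\mathcal{B}'$ is dense with respect to $\langle\cdot,\cdot\rangle$ if $g\in\mathcal{B}$ and $\langle g,w\rangle=0$ for all $w\in W$ imply $g=0$; an operator is densely defined w.r.t. $\langle\cdot,\cdot\rangle$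 if its domain is dense in this sense. For a densely defined $T:D(T)\subset\mathcal{B}'\to\mathcal{B}'$, its adjoint with respect to $\langle\cdot,\cdot\rangle$ is $T':D(T')\subset\mathcal{B}\to\mathcal{B}$ with $D(T')=\{g\in\mathcal{B}:\exists z\in\mathcal{B}\text{ with }\langle g,Th\rangle=\langle z,h\rangle\ \forall h\in D(T)\}$ and $T'g:=z$. Equality $U_f=K_f'$ includes equality of domains. *)

(* Defs.v *)
From HB Require Import structures.
From mathcomp Require Import all_boot all_order all_algebra.
From mathcomp Require Import complex.
From mathcomp Require Import all_classical all_reals.

Set Implicit Arguments.
Unset Strict Implicit.
Unset Printing Implicit Defensive.

Import Order.TTheory GRing.Theory Num.Theory.
Import ComplexField.
Local Open Scope ring_scope.
Local Open Scope classical_set_scope.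

Section RKBS.
Variables (R : realType) (X : Type).
Local Notation C := R[i].
Local Notation F := (X -> C).

Definition is_subspace (V : set F) : Prop :=
  V (fun _ => 0) /\
  (forall g h, V g -> V h -> V (fun x => g x + h x)) /\
  (forall (c : C) g, V g -> V (fun x => c * g x)).

Definition is_norm_on (V : set F) (n : F -> R) : Prop :=
  (forall g, V g -> 0 <= n g) /\
  (forall g, V g -> n g = 0 -> g = (fun _ => 0)) /\
  (forall (c : C) g, V g -> (n (fun x => c * g x))%:C%C = `|c| * (n g)%:C%C) /\
  (forall g h, V g -> V h -> n (fun x => g x + h x) <= n g + n h).

Definition is_complete_on (V : set F) (n : F -> R) : Prop :=
  forall u : nat -> F, (forall m, V (u m)) ->
    (forall e : R, 0 < e -> exists N, forall p q, (N <= p)%N -> (N <= q)%N ->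
         n (fun x => u p x - u q x) < e) ->
    exists l, V l /\
      (forall e : R, 0 < e -> exists N, forall p, (N <= p)%N ->
         n (fun x => u p x - l x) < e).

Definition is_Banach_fun_space (V : set F) (n : F -> R) : Prop :=
  [/\ is_subspace V, is_norm_on V n & is_complete_on V n].

Definition is_bilinear_on (B B' : set F) (pair : F -> F -> C) : Prop :=
  [/\ (forall g1 g2 h, B g1 -> B g2 -> B' h ->
          pair (fun x => g1 x + g2 x) h = pair g1 h + pair g2 h),
      (forall (c : C) g h, B g -> B' h -> pair (fun x => c * g x) h = c * pair g h),
      (forall g h1 h2, B g -> B' h1 -> B' h2 ->
          pair g (fun x => h1 x + h2 x) = pair g h1 + pair g h2) &
      (forall (c : C) g h, B g -> B' h -> pair g (fun x => c * h x) = c * pair g h)].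

(** Continuity of the linear functionals
    (point evaluations) and of the bilinear form is expressed, as usual for
    (multi)linear maps on normed spaces, as boundedness. *)
Definition is_RKBS (B : set F) (nB : F -> R) (B' : set F) (nB' : F -> R)
    (pair : F -> F -> C) (k : X -> X -> C) : Prop :=
  [/\ is_Banach_fun_space B nB /\ is_Banach_fun_space B' nB',
      (forall x, exists M : R, forall g, B g -> `|g x| <= (M * nB g)%:C%C),
      is_bilinear_on B B' pair,
      (exists M : R, forall g h, B g -> B' h -> `|pair g h| <= (M * nB g * nB' h)%:C%C) &
      (forall x, B' (k x)) /\ (forall x g, B g -> g x = pair g (k x))].

Definition kcomb (k : X -> X -> C) (n : nat) (c : 'I_n -> C) (p : 'I_n -> X) : F :=
  fun y => \sum_(i < n) c i * k (p i) y.

Definition kernel_lin_indep (k : X -> X -> C) : Prop :=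
  forall n (c : 'I_n -> C) (p : 'I_n -> X), injective p ->
    kcomb k c p = (fun _ => 0) -> forall i, c i = 0.

Definition kspan (k : X -> X -> C) : set F :=
  [set w | exists n (c : 'I_n -> C) (p : 'I_n -> X), w = kcomb k c p].

(** Perron--Frobenius operator: linear extension of k(x,.) |-> k(f x,.)
    on Span{k(x,.)}; (well defined when the k(x,.) are linearly independent;
    outside the span it is given the irrelevant value 0). *)
Definition PF (k : X -> X -> C) (f : X -> X) (w : F) : F :=
  xget (fun _ => 0)
    [set v | exists n (c : 'I_n -> C) (p : 'I_n -> X),
               w = kcomb k c p /\ v = kcomb k c (f \o p)].

Definition koopman_dom (B : set F) (f : X -> X) : set F :=
  [set g | B g /\ B (g \o f)].
Definition koopman (f : X -> X) (g : F) : F := g \o f.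

Definition dense_wrt (B : set F) (pair : F -> F -> C) (W : set F) : Prop :=
  forall g, B g -> (forall w, W w -> pair g w = 0) -> g = (fun _ => 0).

Definition adjoint_rel (B : set F) (pair : F -> F -> C) (DT : set F) (T : F -> F)
    (g z : F) : Prop :=
  B z /\ forall h, DT h -> pair g (T h) = pair z h.
Definition adjoint_dom (B : set F) (pair : F -> F -> C) (DT : set F) (T : F -> F)
    : set F :=
  [set g | B g /\ exists z, adjoint_rel B pair DT T g z].
Definition adjoint (B : set F) (pair : F -> F -> C) (DT : set F) (T : F -> F)
    (g : F) : F :=
  xget (fun _ => 0) [set z | adjoint_rel B pair DT T g z].

End RKBS.

(* Main.v *)
Require Import Defs.
From HB Require Import structures.
From mathcomp Require Import all_boot all_order all_algebra.
From mathcomp Require Import complex.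
From mathcomp Require Import all_classical all_reals.
Import Order.TTheory GRing.Theory Num.Theory.
Import ComplexField.
Local Open Scope ring_scope.
Local Open Scope classical_set_scope.

Set Implicit Arguments.
Unset Strict Implicit.
Section Aux.
Variables (R : realType) (X : Type).
Local Notation C := R[i].

Lemma widen_lift m (j : 'I_m) : widen_ord (leqnSn m) j = lift ord_max j.
Proof. by apply: val_inj; rewrite [RHS]lift_max. Qed.

Lemma add1 m (d : 'I_m -> C) (q : 'I_m -> X) (a : C) (x : X) :
  injective q -> exists m' (d' : 'I_m' -> C) (q' : 'I_m' -> X), injective q' /\
   forall phi : X -> C, \sum_(j < m) d j * phi (q j) + a * phi x =
                        \sum_(j < m') d' j * phi (q' j).
Proof.
move=> qinj.
case: (pselect (exists j, q j = x)) => [[j0 qj0]|nq].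
  exists m, (fun j => d j + (j == j0)%:R * a), q; split => // phi.
  under [RHS]eq_bigr => j _ do rewrite mulrDl.
  rewrite big_split /=; congr (_ + _).
  rewrite (bigD1 j0) //= eqxx mul1r qj0 big1 ?addr0 // => j /negbTE ->.
  by rewrite mul0r mul0r.
exists m.+1, (fun j => if unlift ord_max j is Some j' then d j' else a),
  (fun j => if unlift ord_max j is Some j' then q j' else x); split.
  move=> i j; case: unliftP => [i'|] ->; case: unliftP => [j'|] -> //.
  - by move=> /qinj ->.
  - by move=> h; exfalso; apply: nq; exists i'.
  - by move=> h; exfalso; apply: nq; exists j'.
move=> phi; rewrite big_ord_recr /= unlift_none; congr (_ + _).
by apply: eq_bigr => j _; rewrite widen_lift liftK.
Qed.

Lemma ext n (c : 'I_n -> C) (p : 'I_n -> X) m0 (d0 : 'I_m0 -> C) (q0 : 'I_m0 -> X) :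
  injective q0 -> exists m (d : 'I_m -> C) (q : 'I_m -> X), injective q /\
   forall phi : X -> C, \sum_(j < m0) d0 j * phi (q0 j) + \sum_(i < n) c i * phi (p i) =
                        \sum_(j < m) d j * phi (q j).
Proof.
move=> q0inj; elim: n c p => [|n IH] c p.
  by exists m0, d0, q0; split => // phi; rewrite big_ord0 addr0.
have [m1 [d1 [q1 [q1inj H1]]]] :=
  IH (fun i => c (widen_ord (leqnSn n) i)) (fun i => p (widen_ord (leqnSn n) i)).
have [m2 [d2 [q2 [q2inj H2]]]] := add1 d1 (c ord_max) (p ord_max) q1inj.
exists m2, d2, q2; split => // phi.
by rewrite big_ord_recr /= addrA H1 H2.
Qed.

Lemma Lrep (k : X -> X -> C) (Hind : kernel_lin_indep k) n (c : 'I_n -> C) p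
   m (d : 'I_m -> C) q :
  kcomb k c p = kcomb k d q -> forall phi : X -> C,
   \sum_(i < n) c i * phi (p i) = \sum_(j < m) d j * phi (q j).
Proof.
move=> Heq phi.
have q00 : 'I_0 -> X by case.
have inj0 : injective q00 by case.
have [m1 [d1 [q1 [q1inj H1]]]] := ext c p (fun _ => 0) inj0.
have [m2 [d2 [q2 [q2inj H2]]]] := ext (fun j => - d j) q d1 q1inj.
have E psi : \sum_(j < m2) d2 j * psi (q2 j) =
   \sum_(i < n) c i * psi (p i) - \sum_(j < m) d j * psi (q j).
  rewrite -H2 -H1 big_ord0 add0r; congr (_ + _).
  by rewrite -sumrN; apply: eq_bigr => j _; rewrite mulNr.
have Hk : kcomb k d2 q2 = (fun _ => 0).
  apply: funext => y; rewrite /kcomb (E (fun x => k x y)).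
  by have := congr1 (fun F => F y) Heq; rewrite /kcomb /= => ->; rewrite subrr.
have Z := Hind _ _ _ q2inj Hk.
apply/eqP; rewrite -subr_eq0 -E; apply/eqP.
by apply: big1 => j _; rewrite Z mul0r.
Qed.

Lemma Lpair (B : set (X -> C)) nB B' nB' pair (k : X -> X -> C)
  (HB : is_RKBS B nB B' nB' pair k) g n (c : 'I_n -> C) p :
  B g -> B' (kcomb k c p) /\ pair g (kcomb k c p) = \sum_(i < n) c i * g (p i).
Proof.
case: HB => [[[[S0 [SD SZ]] _ _] [[S0' [SD' SZ']] _ _]] _ [_ _ PD PZ] _ [Bk Rk]] Bg.
elim: n c p => [|n IH] c p.
  have -> : kcomb k c p = (fun _ => 0) by apply: funext => y; rewrite /kcomb big_ord0.
  split => //; rewrite big_ord0.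
  have -> : (fun _ : X => 0 : C) = (fun x => 0 * (fun _ => 0 : C) x).
    by apply: funext => y; rewrite mul0r.
  by rewrite PZ // mul0r.
have [IH1 IH2] := IH (fun i => c (widen_ord (leqnSn n) i)) (fun i => p (widen_ord (leqnSn n) i)).
have -> : kcomb k c p = (fun y => kcomb k (fun i => c (widen_ord (leqnSn n) i))
     (fun i => p (widen_ord (leqnSn n) i)) y + c ord_max * k (p ord_max) y).
  by apply: funext => y; rewrite /kcomb big_ord_recr.
split; first by apply: SD' => //; apply: SZ'.
by rewrite PD //; [rewrite PZ // -Rk // IH2 big_ord_recr | apply: SZ'].
Qed.

Lemma Lpf (B : set (X -> C)) nB B' nB' pair (k : X -> X -> C)
  (HB : is_RKBS B nB B' nB' pair k) (Hind : kernel_lin_indep k) f g n (c : 'I_n -> C) p :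
  B g -> pair g (PF k f (kcomb k c p)) = \sum_(i < n) c i * g (f (p i)).
Proof.
move=> Bg; rewrite /PF.
set S := [set v | _].
have : S (xget (fun _ => 0) S).
  by apply: xgetPex; exists (kcomb k c (f \o p)); exists n, c, p.
move=> [n' [c' [p' [E ->]]]].
rewrite (proj2 (Lpair HB c' (f \o p') Bg)).
by symmetry; apply: (Lrep Hind E (fun x => g (f x))).
Qed.

End Aux.

Lemma kx_span (R : realType) (X : Type) (k : X -> X -> R[i]) x :
  k x = kcomb k (fun _ : 'I_1 => 1) (fun _ => x).
Proof. by apply: funext => y; rewrite /kcomb big_ord1 mul1r. Qed.

Theorem lemma2 (R : realType) (X : Type)
    (B : set (X -> R[i])) (nB : (X -> R[i]) -> R)
    (B' : set (X -> R[i])) (nB' : (X -> R[i]) -> R)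
    (pair : (X -> R[i]) -> (X -> R[i]) -> R[i]) (k : X -> X -> R[i])
    (HB : is_RKBS B nB B' nB' pair k) (Hind : kernel_lin_indep k)
    (f : X -> X) :
  dense_wrt B pair (kspan k) /\
  koopman_dom B f = adjoint_dom B pair (kspan k) (PF k f) /\
  (forall g, adjoint_dom B pair (kspan k) (PF k f) g ->
     adjoint B pair (kspan k) (PF k f) g = koopman f g).
Proof.
have HB' := HB; case: HB' => _ _ _ _ [Bk Rk].
have kin x : kspan k (k x) by exists 1%N, (fun _ => 1), (fun _ => x); exact: kx_span.
have Lz g z : B g -> adjoint_rel B pair (kspan k) (PF k f) g z -> z = g \o f.
  move=> Bg [Bz Hz]; apply: funext => x.
  have := Hz _ (kin x); rewrite -Rk // [X in PF _ _ X]kx_span (Lpf HB Hind) //.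
  by rewrite big_ord1 mul1r => <-.
split.
  move=> g Bg H; apply: funext => x; rewrite Rk //; exact: H.
split.
  apply/seteqP; split => g.
    move=> [Bg Bgf]; split => //; exists (g \o f); split => //.
    move=> h [n [c [p ->]]]; rewrite (Lpf HB Hind) //.
    by rewrite (proj2 (Lpair HB c p Bgf)).
  move=> [Bg [z Hz]]; split => //.
  by rewrite -(Lz g z Bg Hz); case: Hz.
move=> g [Bg Hex]; rewrite /adjoint.
have := xgetPex (fun _ => 0) Hex.
exact: Lz.
Qed.
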